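(* Let $G$ be a finite group, let $K$ be a normal solvable subgroup of $G$, and let $p \in \pi(G)$. If $d_G(p) < |L(p,G)|$, then $p \notin \pi(K)$.
   Context: For a finite group $X$, $\pi(X)$ is the set of prime divisors of $|X|$. The prime graph $GK(G)$ of $G$ has vertex set $\pi(G)$, with distinct vertices $p,q$ adjacent iff $G$ contains an element of order $pq$; $d_G(p)$ denotes the degree of the vertex $p$ in $GK(G)$. For $p \in \pi(G)$, $w_G(p) = \max\{ i : p^i \mid |G|\}$. For a positive integer $m$, $[m] = \operatorname{lcm}(1,2,\dots,m)$. For $p\in\pi(G)$, define $$L(p,G) = \{ q \in \pi(G)\setminus\{p\} \;:\; p \nmid q^{n}-1 \text{ and } q \nmid p^{\gcd([m],\,q-1)}-1, \text{ where } m = w_G(p),\ n = w_G(q)\}.$$ *)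

(* Defs.v *)
From mathcomp Require Import all_boot all_fingroup all_solvable.
Set Implicit Arguments. Unset Strict Implicit. Unset Printing Implicit Defensive.
Import GroupScope.

Definition lcm_upto (m : nat) : nat := \big[lcmn/1%N]_(1 <= i < m.+1) i.

Section PrimeGraph.
Variable gT : finGroupType.

Definition wG (G : {group gT}) (p : nat) : nat := logn p #|G|.

Definition gk_adj (G : {group gT}) (p q : nat) : bool :=
  (p != q) && [exists x in G, #[x] == (p * q)%N].

Definition gk_deg (G : {group gT}) (p : nat) : nat :=
  size [seq q <- primes #|G| | gk_adj G p q].

Definition Lset (G : {group gT}) (p : nat) : seq nat :=
  [seq q <- primes #|G| |
     (q != p) &&
     ~~ (p %| q ^ wG G q - 1) &&
     ~~ (q %| p ^ gcdn (lcm_upto (wG G p)) (q - 1) - 1)].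

End PrimeGraph.

(* Main.v *)
Require Import Defs.
From mathcomp Require Import all_boot all_fingroup all_solvable.
Import GroupScope.

Section Arith.
Local Open Scope nat_scope.

Lemma dvd_lcm_upto k m : 0 < k <= m -> k %| lcm_upto m.
Proof.
elim: m => [|m IH] /andP[k0 km]; first by rewrite leqn0 in km; rewrite (eqP km) in k0.
rewrite /lcm_upto big_nat_recr //= -/(lcm_upto m).
rewrite leq_eqVlt in km; case/orP: km => [/eqP -> | km]; first exact: dvdn_lcmr.
apply: dvdn_trans (dvdn_lcml _ _); apply: IH; by rewrite k0.
Qed.

Arguments dvd_lcm_upto {k m}.

Lemma mod1_dvd p q k : 0 < p -> (q %| p ^ k - 1) = (p ^ k == 1 %[mod q]).
Proof. by move=> p0; rewrite eqn_mod_dvd // expn_gt0 p0. Qed.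

Lemma exp_mod1_mul p q a c : p ^ a = 1 %[mod q] -> p ^ (a * c) = 1 %[mod q].
Proof. by move=> H; rewrite expnM -modnXm H modnXm exp1n. Qed.

Lemma exp_mod1_gcd p q a b : 0 < a -> p ^ a = 1 %[mod q] -> p ^ b = 1 %[mod q] ->
  p ^ gcdn a b = 1 %[mod q].
Proof.
move=> a0 Ha Hb; have [c _ /dvdnP[d Hd]] := Bezoutl b a0.
have E: p ^ (gcdn a b) * p ^ (c * b) = p ^ (d * a) by rewrite -expnD Hd.
have Hcb : p ^ (c * b) = 1 %[mod q] by rewrite mulnC; apply: exp_mod1_mul.
have Hda : p ^ (d * a) = 1 %[mod q] by rewrite mulnC; apply: exp_mod1_mul.
have := congr1 (modn^~ q) E; rewrite /= -modnMmr Hcb modnMmr muln1 Hda //.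
Qed.

Lemma arith p q k m : prime p -> prime q -> p != q -> 0 < k <= m ->
  q %| p ^ k - 1 -> q %| p ^ gcdn (lcm_upto m) (q - 1) - 1.
Proof.
move=> pp pq npq km; have p0 := prime_gt0 pp.
rewrite !mod1_dvd // => /eqP Hk; apply/eqP.
have l0 : 0 < lcm_upto m.
  elim: (m) => [|j IH]; first by rewrite /lcm_upto big_geq.
  by rewrite /lcm_upto big_nat_recr //= -/(lcm_upto j) lcmn_gt0 IH.
apply: exp_mod1_gcd => //.
  by have /dvdnP[c ->] := dvd_lcm_upto km; rewrite mulnC; apply: exp_mod1_mul.
rewrite subn1 -totient_prime //; apply: Euler_exp_totient.
by rewrite coprime_sym prime_coprime // dvdn_prime2 // eq_sym.
Qed.

End Arith.

Lemma fix_elt (gT : finGroupType) (N : {group gT}) (y : gT) r s :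
  prime r -> prime s -> r.-group N -> N :!=: 1 -> y \in 'N(N) -> #[y] = s ->
  ~~ (s %| #|N| - 1)%N -> exists a, [/\ a \in N, #[a] = r & commute a y].
Proof.
move=> pr ps rN ntN nNy oy ndv.
have sy : s.-group <[y]> by rewrite /pgroup -orderE oy pnat_id.
have act : [acts <[y]>, on N | 'J] by rewrite /= astabsJ cycle_subG.
have := pgroup_fix_mod sy act; rewrite afixJ => Hmod.
have ntC : 'C_N(<[y]>) :!=: 1.
  apply: contra ndv => /eqP C1.
  by rewrite -eqn_mod_dvd ?cardG_gt0 // Hmod C1 cards1.
have rC : r.-group 'C_N(<[y]>) := pgroupS (subsetIl _ _) rN.
have [_ dvC _] := pgroup_pdiv rC ntC.
have [a Ca oa] := Cauchy pr dvC.
move: Ca; rewrite inE => /andP[Na /centP cay].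
exists a; split => //; have := cay y (cycle_id y); done.

Qed.

Arguments fix_elt {gT N y r s}.

Lemma elt_order_dvd (gT : finGroupType) (g : gT) n :
  (n %| #[g])%N -> exists k, #[g ^+ k] = n.
Proof.
case/dvdnP=> c oc; have n0 : (0 < n)%N.
  by rewrite lt0n; apply/eqP=> n0; move: oc; rewrite n0 muln0; apply/eqP; rewrite -lt0n.
have c0 : (0 < c)%N.
  by rewrite lt0n; apply/eqP=> c0; move: oc; rewrite c0 mul0n; apply/eqP; rewrite -lt0n.
exists c; rewrite orderXdiv oc ?mulKn // dvdn_mulr //.
Qed.

Lemma lift_order (gT : finGroupType) (G M : {group gT}) (xb : coset_of M) n :
  xb \in G / M -> #[xb] = n -> exists2 h, h \in G & #[h] = n.
Proof.
move=> /morphimP[g Ng Gg ->] ox.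
have := morph_order (coset_morphism M) Ng; rewrite /= ox => /elt_order_dvd[k ok].
by exists (g ^+ k) => //; apply: groupX.
Qed.

Arguments lift_order {gT G M xb n}.

Lemma main_elt (gT : finGroupType) (G K : {group gT}) p q :
  K <| G -> solvable K -> prime p -> prime q -> p != q ->
  (p %| #|K|)%N -> (q %| #|G|)%N -> ~~ (p %| q ^ logn q #|G| - 1)%N ->
  (forall k, 0 < k <= logn p #|G| -> ~~ (q %| p ^ k - 1))%N ->
  exists2 x, x \in G & #[x] = (p * q)%N.
Proof.
move=> nKG solK pp pq npq pK qG Hq Hk.
have [sKG _] := andP nKG.
set M := 'O_p^'(K).
have nMG : M <| G := char_normal_trans (pcore_char _ _) nKG.
have p'M : p^'.-group M := pcore_pgroup _ _.
have [sMG nMG'] := andP nMG.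
have pM : ~~ (p %| #|M|)%N.
  apply/negP=> pM; have := (pgroupP p'M) p pp pM; by rewrite !inE /= eqxx.
have cpq : coprime p q by rewrite prime_coprime // dvdn_prime2.
case: (boolP (q %| #|G / M|)%N) => [qGM | nqGM].
- have [yb Gyb oyb] := Cauchy pq qGM.
  pose N := 'O_p(K / M).
  have nNGb : N <| G / M := char_normal_trans (pcore_char _ _) (quotient_normal _ nKG).
  have pN : p.-group N := pcore_pgroup _ _.
  have ntN : N :!=: 1.
    have solKb : solvable (K / M) := quotient_sol _ solK.
    rewrite /N -(Fitting_eq_pcore (trivg_pcore_quotient _ _)) trivg_Fitting //.
    apply/negP=> /eqP Kb1.
    have : #|K / M| = 1%N by rewrite Kb1 cards1.
    rewrite card_quotient ?(normal_norm (pcore_normal _ _)) // => iKM.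
    have := Lagrange (pcore_sub p^' K); rewrite -/M iKM muln1 => eKM.
    by move: pM; rewrite eKM pK.
  have nNy : yb \in 'N(N) := subsetP (normal_norm nNGb) yb Gyb.
  have ndv : ~~ (q %| #|N| - 1)%N.
    have [_ _ [j oN]] := pgroup_pdiv pN ntN.
    rewrite oN; apply: Hk; rewrite /= -pfactor_dvdn // -oN.
    apply: dvdn_trans (cardSg (pcore_sub _ _)) _.
    apply: dvdn_trans (dvdn_quotient _ _) _.
    exact: cardSg.
  have [a [Na oa cay]] := fix_elt pp pq pN ntN nNy oyb ndv.
  have Ga : a \in G / M := subsetP (normal_sub nNGb) a Na.
  have oay : #[a * yb] = (p * q)%N by rewrite orderM // oa oyb.
  exact: lift_order (groupM Ga Gyb) oay.
- have eG : #|G| = (#|M| * #|G / M|)%N by rewrite card_quotient // Lagrange.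
  have lq : logn q #|M| = logn q #|G|.
    rewrite eG lognM ?cardG_gt0 // (@logn_coprime q #|G / M|) ?addn0 // prime_coprime //.
  have [Q sylQ] := Sylow_exists q M.
  have FA := Frattini_arg nMG sylQ.
  have pNQ : (p %| #|'N_G(Q)|)%N.
    have := mul_cardG M 'N_G(Q); rewrite FA => e.
    have : (p %| #|M| * #|'N_G(Q)|)%N.
      by rewrite e dvdn_mulr // (dvdn_trans pK (cardSg sKG)).
    by rewrite Euclid_dvdM // (negbTE pM).
  have [x Nx ox] := Cauchy pp pNQ.
  have qQ : q.-group Q := pHall_pgroup sylQ.
  have oQ : #|Q| = (q ^ logn q #|G|)%N by rewrite (card_Hall sylQ) p_part lq.
  have ntQ : Q :!=: 1.
    apply/negP=> /eqP Q1; move: oQ; rewrite Q1 cards1 => /esym/eqP.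
    rewrite -(expn0 q) eqn_exp2l ?prime_gt1 // => /eqP l0.
    have : (0 < logn q #|G|)%N by rewrite logn_gt0 mem_primes pq cardG_gt0 qG.
    by rewrite l0.
  have nQx : x \in 'N(Q) by move: Nx; rewrite inE => /andP[].
  have ndv : ~~ (p %| #|Q| - 1)%N by rewrite oQ.
  have [a [Qa oa cax]] := fix_elt pq pp qQ ntQ nQx ox ndv.
  have Ga : a \in G := subsetP sMG a (subsetP (pHall_sub sylQ) a Qa).
  have Gx : x \in G by move: Nx; rewrite inE => /andP[].
  exists (a * x); first exact: groupM.
  by rewrite orderM ?oa ?ox 1?mulnC // coprime_sym.
Qed.

Lemma count_le_in (s : seq nat) (P Q : pred nat) :
  (forall q, q \in s -> P q -> Q q) -> (count P s <= count Q s)%N.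
Proof.
elim: s => [|a s IH] //= H.
apply: leq_add; last by apply: IH => q qs; apply: H; rewrite inE qs orbT.
case Pa: (P a) => //; by rewrite (H a) // inE eqxx.
Qed.

Theorem theorem2p7 (gT : finGroupType) (G K : {group gT}) (p : nat) :
  K <| G -> solvable K -> p \in primes #|G| ->
  gk_deg G p < size (Lset G p) ->
  p \notin primes #|K|.
Proof.
move=> nKG solK pG ltd; apply/negP => pK.
move: pG pK; rewrite !mem_primes => /and3P[pp _ pG] /and3P[_ _ pK].
move: ltd; rewrite /gk_deg /Lset !size_filter ltnNge; apply/negP; apply/negPn.
apply: count_le_in => q; rewrite mem_primes => /and3P[pq _ qG] /andP[/andP[nqp Hq] Hg].
have npq : p != q by rewrite eq_sym.
have Hk : forall k, (0 < k <= logn p #|G| -> ~~ (q %| p ^ k - 1))%N.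
  move=> k km; apply: contra Hg => dv.
  exact: (@arith p q k _ pp pq npq km dv).
have [x Gx ox] := @main_elt gT G K p q nKG solK pp pq npq pK qG Hq Hk.
rewrite /gk_adj npq /=; apply/existsP; exists x; by rewrite Gx ox eqxx.
Qed.
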